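(* Let $N\ge 1$, $r\in\{1,\dots,N\}$, $m\ge 2$ an integer, and $\alpha\in\mathbb{C}^{N\times N}$ (independent of $\epsilon$). Let $\beta_{m-1},\beta_m$ be $N\times N$ matrix-valued asymptotic expansions in a small parameter $\epsilon\to 0$ of the form $$\beta_{m-1}=\beta_{m-1,0}+\beta_{m-1,1}\epsilon+O(\epsilon^2),\qquad \beta_m=\beta_{m,0}+\beta_{m,1}\epsilon+O(\epsilon^2),\qquad \beta_{m-1,i},\beta_{m,i}\in\mathbb{C}^{N\times N},$$ where all entries in the first $r$ rows of $\beta_{m,0}$ vanish, and $\det\beta_m=O(\epsilon^{r})$. Define $\beta_{m+1},\beta_{m+2},\beta_{m+3},\beta_{m+4}$ by the matrix discrete Painlevé I recursion $$\beta_{n+1}=n\beta_n^{-1}-\beta_{n-1}-\beta_n-\alpha .$$ Assume that, as $\epsilon\to0$, $$\det\beta_{m+1}=O(\epsilon^{-r}),\quad \det\beta_{m+2}=O(\epsilon^{-r}),\quad \det\beta_{m+3}=O(\epsilon^{r}),\quad \det\beta_{m+4}=O(1).$$ Then the singularity is confined with confinement time $4$: $\beta_{m+4}=O(1)$ as $\epsilon\to0$, i.e. $\beta_{m+4}$ has an asymptotic expansion with no negative powers of $\epsilon$ (and, by the hypothesis on its determinant, it is invertible at $\epsilon=0$), so that neither poles nor zeros persist at step $m+4$.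
   Context: All expansions are formal/asymptotic expansions in powers of $\epsilon$ with matrix coefficients; inverses are taken in the ring of such (Laurent) expansions. A condition $\det X=O(\epsilon^{k})$ is understood in the paper's sense of exact order: $\det X=c\,\epsilon^{k}+O(\epsilon^{k+1})$ with $c\neq0$. The confinement time is the minimum number of iterations of the recursion, after the appearance of a zero (a matrix $\beta_m$ with singular leading coefficient), needed to recover a matrix expansion with neither poles (negative powers of $\epsilon$) nor zeros (vanishing determinant at $\epsilon=0$). *)

(* Defs.v *)
From HB Require Import structures.
From mathcomp Require Import all_boot all_order all_algebra.
From mathcomp Require Import complex.
From mathcomp Require Import zify.
From mathcomp Require Import boolp classical_sets functions reals Rstruct.

Set Implicit Arguments.
Unset Strict Implicit.
Unset Printing Implicit Defensive.

Import Order.TTheory GRing.Theory Num.Theory.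
Local Open Scope ring_scope.

Definition C : numClosedFieldType := complex Rdefinitions.R.

Definition fps := nat -> C.
HB.instance Definition _ := GRing.Zmodule.on fps.

Definition fps_one : fps := fun n => (n == 0%N)%:R.
Definition fps_mul (f g : fps) : fps :=
  fun n => \sum_(i < n.+1) f i * g (n - i)%N.

Definition fps_tr (k : nat) (f : fps) : {poly C} := \poly_(i < k) f i.

Lemma fps_trE k f i : (fps_tr k f)`_i = if (i < k)%N then f i else 0.
Proof. by rewrite /fps_tr coef_poly. Qed.

Lemma fps_mulE f g n k : (n < k)%N -> fps_mul f g n = (fps_tr k f * fps_tr k g)`_n.
Proof.
move=> nk; rewrite coefM /fps_mul; apply: eq_bigr => i _.
rewrite !fps_trE; have io := ltn_ord i.
rewrite (leq_ltn_trans _ nk) ?(leq_ltn_trans _ nk) //; first exact: leq_subr.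
Qed.

Lemma coef_mul_agree (p p' q : {poly C}) n :
  (forall j, (j <= n)%N -> p`_j = p'`_j) -> (p * q)`_n = (p' * q)`_n.
Proof.
move=> h; rewrite !coefM; apply: eq_bigr => i _; rewrite h //.
by rewrite -ltnS.
Qed.

Lemma fps_mulA : associative fps_mul.
Proof.
move=> f g h; apply/funext => n.
set F := fps_tr n.+1 f; set G := fps_tr n.+1 g; set H := fps_tr n.+1 h.
have agree u v : forall j, (j <= n)%N ->
    (fps_tr n.+1 (fps_mul u v))`_j = (fps_tr n.+1 u * fps_tr n.+1 v)`_j.
  by move=> j jn; rewrite fps_trE ltnS jn; apply: fps_mulE; rewrite ltnS.
rewrite (fps_mulE _ _ (ltnSn n)) [RHS](fps_mulE _ _ (ltnSn n)).
rewrite (coef_mul_agree _ (agree f g)).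
rewrite [fps_tr _ f * _]mulrC.
rewrite (coef_mul_agree _ (agree g h)) -/F -/G -/H.
by have -> : G * H * F = F * G * H by rewrite mulrC mulrA.
Qed.

Lemma fps_mulC : commutative fps_mul.
Proof.
move=> f g; apply/funext => n.
by rewrite !(fps_mulE _ _ (ltnSn n)) mulrC.
Qed.

Lemma fps_mul1 : left_id fps_one fps_mul.
Proof.
move=> f; apply/funext => n; rewrite (fps_mulE _ _ (ltnSn n)).
have -> : fps_tr n.+1 fps_one = 1.
  apply/polyP => i; rewrite fps_trE coefC /fps_one.
  by case: i => [|i] //=; case: ifP.
by rewrite mul1r fps_trE ltnSn.
Qed.

Lemma fps_mulDl : left_distributive fps_mul +%R.
Proof.
move=> f g h; apply/funext => n.
have -> : (fps_mul f h + fps_mul g h) n = fps_mul f h n + fps_mul g h n by [].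
rewrite !(fps_mulE _ _ (ltnSn n)).
have -> : fps_tr n.+1 (f + g) = fps_tr n.+1 f + fps_tr n.+1 g.
  by apply/polyP => i; rewrite coefD !fps_trE; case: ifP; rewrite ?addr0.
by rewrite mulrDl coefD.
Qed.

Lemma fps_one_neq0 : fps_one != 0.
Proof.
apply/eqP => h; have := congr1 (fun f : fps => f 0%N) h.
by rewrite /fps_one /= => /eqP; rewrite oner_eq0.
Qed.

HB.instance Definition _ := GRing.Zmodule_isComNzRing.Build fps
  fps_mulA fps_mulC fps_mul1 fps_mulDl fps_one_neq0.

Definition fps_unit : {pred fps} := fun x => `[< exists y : fps, y * x = 1 >].
Definition fps_inv (x : fps) : fps :=
  match pselect (exists y : fps, y * x = 1) with
  | left h => projT1 (cid h)
  | right _ => x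
  end.


Lemma fps_mulVx : {in fps_unit, left_inverse 1 fps_inv *%R}.
Proof.
move=> x hx; have {}hx : exists y, y * x = 1 by exact/asboolP.
rewrite /fps_inv; case: pselect => [h|nh]; first exact: (projT2 (cid h)).
by exfalso; apply: nh.
Qed.

Lemma fps_unitPl (x y : fps) : y * x = 1 -> fps_unit x.
Proof. by move=> h; apply/asboolP; exists y. Qed.

Lemma fps_invr_out : {in [predC fps_unit], fps_inv =1 id}.
Proof.
move=> x hx; have {}hx : ~ exists y, y * x = 1.
  by move=> h; move: hx; rewrite inE /=; apply/negP/negPn; apply/asboolP.
by rewrite /fps_inv; case: pselect.
Qed.

HB.instance Definition _ := GRing.ComNzRing_hasMulInverse.Build fps
  fps_mulVx fps_unitPl fps_invr_out.

Lemma fps_mul_coef (f g : fps) n : (f * g) n = \sum_(i < n.+1) f i * g (n - i)%N.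
Proof. by []. Qed.

Lemma fps_neq0 (f : fps) : f != 0 -> exists i, f i != 0.
Proof.
move=> /eqP hf; apply: contrapT => hn; apply: hf; apply/funext => i /=.
by apply/eqP; apply: contrapT => hi; apply: hn; exists i; apply/negP.
Qed.

Lemma fps_integral : GRing.integral_domain_axiom fps.
Proof.
move=> x y hxy; case: (eqVneq x 0) => //= hx; case: (eqVneq y 0) => //= hy.
exfalso.
have [i0 hi0] := fps_neq0 hx; have [j0 hj0] := fps_neq0 hy.
have ex1 : exists i, x i != 0 by exists i0.
have ex2 : exists j, y j != 0 by exists j0.
case: (ex_minnP ex1) => i xi imin; case: (ex_minnP ex2) => j yj jmin.
have := congr1 (fun f : fps => f (i + j)%N) hxy => /=.
rewrite fps_mul_coef.
have ii : (i < (i + j).+1)%N by rewrite ltnS leq_addr.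
rewrite (bigD1 (Ordinal ii)) //= big1 ?addr0 ?addnK.
  move=> /eqP; rewrite mulf_eq0 (negPf xi) /=.
  by apply/negP; rewrite addKn.
move=> k /eqP nk.
have nk' : (nat_of_ord k != i) by apply/eqP => e; apply: nk; apply: val_inj.
case: (ltngtP k i) => [lki|lik|eki]; last by rewrite eki eqxx in nk'.
  have : x k == 0 by apply: contraLR lki => /imin; rewrite -leqNgt.
  by move=> /eqP ->; rewrite mul0r.
have hlt : ((i + j) - k < j)%N.
  have := ltn_ord k; rewrite ltnS => hk; lia.
have : y ((i + j) - k)%N == 0.
  by apply: contraLR hlt => /jmin; rewrite -leqNgt.
by move=> /eqP ->; rewrite mulr0.
Qed.

HB.instance Definition _ := GRing.ComUnitRing_isIntegral.Build fps fps_integral.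

(* The field C((eps)) of formal Laurent series, as the fraction field of
   C[[eps]]. *)
Notation LS := {fraction fps}.
Notation "x %:F" := (@FracField.tofrac fps x).

Definition fps_X : fps := fun n => (n == 1%N)%:R.
Definition fps_const (a : C) : fps := fun n => if n == 0%N then a else 0.
Definition eps : LS := (fps_X)%:F.

Definition exact_order (x : LS) (k : int) : Prop :=
  exists u : fps, u 0%N != 0 /\ x = u%:F * eps ^ k.

Definition lift_mx (N : nat) (A : 'M[fps]_N) : 'M[LS]_N := map_mx (fun f : fps => f%:F) A.

Definition const_lmx (N : nat) (A : 'M[C]_N) : 'M[LS]_N :=
  map_mx (fun a : C => (fps_const a)%:F) A.

Definition coef0_mx (N : nat) (A : 'M[fps]_N) : 'M[C]_N := map_mx (fun f : fps => f 0%N) A.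

Definition dPI_next (N : nat) (alpha : 'M[C]_N) (n : nat) (bprev bcur : 'M[LS]_N)
  : 'M[LS]_N :=
  n%:R *: invmx bcur - bprev - bcur - const_lmx alpha.

(* Main.v *)
Require Import Defs.
From HB Require Import structures.
From mathcomp Require Import all_boot all_order all_algebra.
From mathcomp Require Import complex.
From mathcomp Require Import boolp classical_sets functions reals Rstruct.
From mathcomp Require Import ring.
Import Order.TTheory GRing.Theory Num.Theory.
Local Open Scope ring_scope.

Section Inv.
Variable f : fps.
Let a : C := (f 0%N)^-1.
Fixpoint invs (n : nat) : seq C :=
  match n with
  | 0%N => [:: a]
  | n'.+1 => let s := invs n' in
      rcons s (- a * \sum_(i < n'.+1) f i.+1 * nth 0 s (n' - i)%N)
  end.
Lemma size_invs n : size (invs n) = n.+1.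
Proof. by elim: n => //= n ih; rewrite size_rcons ih. Qed.
Lemma nth_invs n k : (k <= n)%N -> nth 0 (invs n) k = nth 0 (invs k) k.
Proof.
elim: n => [|n ih]; first by rewrite leqn0 => /eqP ->.
rewrite leq_eqVlt => /orP [/eqP -> //|]; rewrite ltnS => kn.
by rewrite /= nth_rcons size_invs ltnS kn ih.
Qed.
Definition finv : fps := fun n => nth 0 (invs n) n.
Lemma finvS n : finv n.+1 = - a * \sum_(i < n.+1) f i.+1 * finv (n - i)%N.
Proof.
rewrite /finv /= nth_rcons size_invs ltnn eqxx; congr (_ * _).
apply: eq_bigr => i _; rewrite nth_invs //.
exact: leq_subr.
Qed.
Hypothesis f0 : f 0%N != 0.
Lemma finvK : f * finv = 1.
Proof.
apply/funext => n; rewrite fps_mul_coef.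
case: n => [|n].
  by rewrite big_ord1 /finv /= /a divff.
rewrite big_ord_recl /= subn0 finvS mulrA mulrN /a divff // mulN1r.
have -> : (1 : fps) n.+1 = 0 by [].
rewrite addrC; apply/eqP; rewrite subr_eq0; apply/eqP.
by apply: eq_bigr => i _; rewrite subSS.
Qed.
End Inv.

Lemma fps_unit0 (f : fps) : f 0%N != 0 -> f \is a GRing.unit.
Proof. by move=> h; apply/unitrP; exists (finv f); rewrite finvK // mulrC finvK. Qed.

Lemma key_const (K : fieldType) n (m : nat) (p mu mui g1 g1i g2 g2i z zi : 'M[K]_n) :
  m%:R != 0 :> K -> mu *m mui = 1%:M -> g1i *m g1 = 1%:M -> g2i *m g2 = 1%:M ->
  zi *m z = 1%:M -> z *m zi = 1%:M ->
  g1 *m p = m%:R *: p -> g2 *m p = m%:R *: p ->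
  z = mu - m.+2%:R *: (g2i *m mu) - m.+1%:R *: (g1i *m mu) ->
  ((m.+3)%:R *: zi + mui *m g2) *m p = 0.
Proof.
move=> m0 hmu h1 h2 hz hz' e1 e2 ez.
have g1ip : g1i *m p = (m%:R)^-1 *: p.
  have h : m%:R *: (g1i *m p) = p by rewrite scalemxAr -e1 mulmxA h1 mul1mx.
  by rewrite -{2}h scalerA mulVf // scale1r.
set y := (_ + _).
have zy : z *m y *m p = 0.
  rewrite /y mulmxDr -scalemxAr hz' ez mulmxA !mulmxBl -!scalemxAl.
  rewrite hmu -!(mulmxA _ mu mui) hmu !mulmx1 mul1mx h2.
  rewrite mulmxDl !mulmxBl -!scalemxAl -!mulmxA e2 mul1mx.
  rewrite -scalemxAr g1ip !scalerA -mulrA mulfV // mulr1 -!scalerBl -scalerDl.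
  have -> : (m.+3%:R + (m%:R - m.+2%:R - m.+1%:R) : K) = 0.
    by rewrite !mulrS; ring.
  by rewrite scale0r.
by rewrite -[y *m p]mul1mx -hz -mulmxA (mulmxA z) zy mulmx0.
Qed.

Lemma fpsM0 (f g : fps) : (f * g) 0%N = f 0%N * g 0%N.
Proof. by rewrite fps_mul_coef big_ord1. Qed.

Definition c0 (f : fps) : C := f 0%N.
Lemma c0_zmod : zmod_morphism c0. Proof. by []. Qed.
HB.instance Definition _ := GRing.isZmodMorphism.Build fps C c0 c0_zmod.
Lemma c0_mono : monoid_morphism c0. Proof. by split => // f g; rewrite /c0 fpsM0. Qed.
HB.instance Definition _ := GRing.isMonoidMorphism.Build fps C c0 c0_mono.

Definition fshift (g : fps) : fps := fun n => g n.+1.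

Lemma fps_X_shift (g : fps) : g 0%N = 0 -> fps_X * fshift g = g.
Proof.
move=> g0; apply/funext => n; rewrite fps_mul_coef.
case: n => [|n]; first by rewrite big_ord1 g0 /fps_X /= mul0r.
rewrite big_ord_recl big_ord_recl big1 ?addr0.
  by rewrite /fps_X /= mul0r mul1r add0r /fshift subn1.
by move=> i _; rewrite /fps_X /= mul0r.
Qed.

Lemma c0X : c0 fps_X = 0. Proof. by []. Qed.

Lemma fps_X_neq0 : fps_X != 0.
Proof.
apply/eqP => h; have := congr1 (fun f : fps => f 1%N) h.
by rewrite /fps_X /= => /eqP; rewrite oner_eq0.
Qed.

Lemma eps_neq0 : eps != 0.
Proof. by rewrite /eps tofrac_eq0 fps_X_neq0. Qed.

Lemma order_lemma (v : fps) (k : int) : exact_order (v%:F * eps ^ k) k -> v 0%N != 0.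
Proof.
move=> [u [u0 e]].
have : u%:F = v%:F by apply: (mulIf (expfz_neq0 _ eps_neq0)); exact: (esym e).
by move=> /eqP; rewrite tofrac_eq => /eqP <-.
Qed.

Lemma prod_if (R : comNzRingType) (x : R) (N r : nat) : (r <= N)%N ->
  \prod_(i < N) (if (i < r)%N then x else 1) = x ^+ r.
Proof.
move=> rN; rewrite -big_mkcond /= -(big_ord_widen _ (fun _ => x) rN).
by rewrite prodr_const card_ord.
Qed.

Lemma invmx_eq (K : comUnitRingType) n (A B : 'M[K]_n) : A *m B = 1%:M -> invmx A = B.
Proof.
move=> h; have [uA _] := mulmx1_unit h.
by rewrite -[invmx A]mulmx1 -h mulmxA mulVmx // mul1mx.
Qed.

Lemma unitmx_fps n (A : 'M[fps]_n) : (\det A) 0%N != 0 -> A \in unitmx.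
Proof. by rewrite unitmxE; exact: fps_unit0. Qed.

Section Lift.
Variable N : nat.
Implicit Types A B : 'M[fps]_N.
Lemma liftM A B : lift_mx (A *m B) = lift_mx A *m lift_mx B. Proof. exact: map_mxM. Qed.
Lemma liftD A B : lift_mx (A + B) = lift_mx A + lift_mx B. Proof. exact: map_mxD. Qed.
Lemma liftB A B : lift_mx (A - B) = lift_mx A - lift_mx B. Proof. exact: map_mxB. Qed.
Lemma liftN A : lift_mx (- A) = - lift_mx A. Proof. exact: map_mxN. Qed.
Lemma liftZn (k : nat) A : lift_mx (k%:R *: A) = k%:R *: lift_mx A.
Proof. by rewrite /lift_mx map_mxZ rmorph_nat. Qed.
Lemma lift1 : lift_mx (1%:M : 'M[fps]_N) = 1%:M. Proof. exact: map_mx1. Qed.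
Lemma liftdet A : \det (lift_mx A) = (\det A)%:F. Proof. exact: det_map_mx. Qed.
Lemma c0M A B : map_mx c0 (A *m B) = map_mx c0 A *m map_mx c0 B. Proof. exact: map_mxM. Qed.
End Lift.

Lemma zmod_id1 (V : zmodType) (u w y a : V) : - u - (w - y - a) - a = y - u - w.
Proof.
by rewrite !opprD !opprK !addrA addrK addrC addrA.
Qed.

Lemma eb3_alg n (D G1i G2i M Al : 'M[fps]_n) (a b : fps) :
  a *: (D *m G2i *m (- M)) - (b *: (D *m G1i *m M) - D *m M - Al) - Al =
  D *m (M - a *: (G2i *m M) - b *: (G1i *m M)).
Proof.
rewrite !mulmxBr -!scalemxAr !mulmxA mulmxN scalerN.
exact: zmod_id1.
Qed.

Arguments key_const {K n m p mu mui g1 g1i g2 g2i z zi}.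

Lemma mapZ_alg (f : {rmorphism fps -> C}) n (M G1i G2i : 'M[fps]_n) (k1 k2 : nat) :
  map_mx f (M - k2%:R *: (G2i *m M) - k1%:R *: (G1i *m M)) =
  map_mx f M - k2%:R *: (map_mx f G2i *m map_mx f M) - k1%:R *: (map_mx f G1i *m map_mx f M).
Proof. by rewrite !map_mxB !map_mxZ !rmorph_nat !map_mxM. Qed.

Lemma mapY_alg (f : {rmorphism fps -> C}) n (Zi Mi G2 : 'M[fps]_n) (k : nat) :
  map_mx f (k%:R *: Zi + Mi *m G2) = k%:R *: map_mx f Zi + map_mx f Mi *m map_mx f G2.
Proof. by rewrite map_mxD map_mxZ rmorph_nat map_mxM. Qed.

Theorem theorem1 (N r m : nat) (alpha : 'M[C]_N) (Bm1 Bm : 'M[fps]_N) :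
  (1 <= r <= N)%N -> (2 <= m)%N ->
  (forall i j : 'I_N, (i < r)%N -> coef0_mx Bm i j = 0) ->
  exact_order (\det (lift_mx Bm)) r%:Z ->
  let b1 := dPI_next alpha m (lift_mx Bm1) (lift_mx Bm) in
  let b2 := dPI_next alpha m.+1 (lift_mx Bm) b1 in
  let b3 := dPI_next alpha m.+2 b1 b2 in
  let b4 := dPI_next alpha m.+3 b2 b3 in
  exact_order (\det b1) (- r%:Z) ->
  exact_order (\det b2) (- r%:Z) ->
  exact_order (\det b3) r%:Z ->
  exact_order (\det b4) 0 ->
  exists B4 : 'M[fps]_N, b4 = lift_mx B4 /\ \det (coef0_mx B4) != 0.
Proof.
move=> /andP[r1 rN] m2 hrows hdet0 b1 b2 b3 b4 h1 h2 h3 h4.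
have db1 : b1 = dPI_next alpha m (lift_mx Bm1) (lift_mx Bm) := erefl.
have db2 : b2 = dPI_next alpha m.+1 (lift_mx Bm) b1 := erefl.
have db3 : b3 = dPI_next alpha m.+2 b1 b2 := erefl.
have db4 : b4 = dPI_next alpha m.+3 b2 b3 := erefl.
clearbody b4 b3 b2 b1.
pose dv := \row_(i < N) (if (i < r)%N then fps_X else 1).
pose D : 'M[fps]_N := diag_mx dv.
pose Dl := lift_mx D.
have detD : \det D = fps_X ^+ r.
  rewrite det_diag; under eq_bigr do rewrite mxE; exact: prod_if.
have detDl : \det Dl = eps ^+ r by rewrite liftdet detD rmorphXn.
have uDl : Dl \in unitmx by rewrite unitmxE unitfE detDl expf_neq0 // eps_neq0.
pose E := invmx Dl.
have hDE : Dl *m E = 1%:M by exact: mulmxV.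
have hED : E *m Dl = 1%:M by exact: mulVmx.
have detE : \det E = eps ^ (- r%:Z) by rewrite det_inv detDl exprnN.
pose M : 'M[fps]_N := \matrix_(i, j) if (i < r)%N then fshift (Bm i j) else Bm i j.
have hBm : Bm = D *m M.
  apply/matrixP => i j; rewrite mul_diag_mx !mxE; case: ifP => ir; last by rewrite mul1r.
  by rewrite fps_X_shift //; have := hrows i j ir; rewrite mxE.
have epsr : eps ^ (r%:Z) = eps ^+ r by [].
have M0 : (\det M) 0%N != 0.
  apply: (@order_lemma _ r%:Z); move: hdet0.
  by rewrite hBm liftdet det_mulmx detD mulrC tofracM tofracXn epsr.
have uM : M \in unitmx by exact: unitmx_fps.
pose Mi := invmx M.
have hMMi : M *m Mi = 1%:M by exact: mulmxV.
have hMiM : Mi *m M = 1%:M by exact: mulVmx.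
have LMMi : lift_mx M *m lift_mx Mi = 1%:M by rewrite -liftM hMMi lift1.
have LMiM : lift_mx Mi *m lift_mx M = 1%:M by rewrite -liftM hMiM lift1.
pose Al : 'M[fps]_N := map_mx fps_const alpha.
have hAl : const_lmx alpha = lift_mx Al by apply/matrixP => i j; rewrite !mxE.
have shape (U V : 'M[fps]_N) :
    exact_order (\det (lift_mx U *m lift_mx V *m E)) (- r%:Z) -> (\det V) 0%N != 0.
  rewrite !det_mulmx !liftdet detE -tofracM => /order_lemma.
  by rewrite fpsM0 mulf_eq0 negb_or => /andP[].
pose K1 := M *m (Bm1 + Bm + Al).
pose G1 := m%:R *: 1%:M - K1 *m D.
have eK : Mi *m K1 = Bm1 + Bm + Al by rewrite /K1 mulmxA hMiM mul1mx.
have eb1 : b1 = lift_mx Mi *m lift_mx G1 *m E.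
  rewrite db1 /dPI_next hAl.
  have -> : invmx (lift_mx Bm) = lift_mx Mi *m E.
    apply: invmx_eq; rewrite hBm liftM -mulmxA (mulmxA (lift_mx M)) LMMi mul1mx hDE.
    done.
  rewrite /G1 liftB liftZn lift1 liftM mulmxBr mulmxBl -scalemxAr mulmx1 -scalemxAl.
  rewrite -!mulmxA hDE mulmx1 -liftM eK !liftD.
  by rewrite !opprD !addrA.
have G10 : (\det G1) 0%N != 0 by apply: (shape Mi); rewrite -eb1.
have uG1 : G1 \in unitmx by exact: unitmx_fps.
pose G1i := invmx G1.
have hG1 : G1 *m G1i = 1%:M by exact: mulmxV.
have hG1' : G1i *m G1 = 1%:M by exact: mulVmx.
have LG1 : lift_mx G1 *m lift_mx G1i = 1%:M by rewrite -liftM hG1 lift1.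
pose J1 := D *m G1i *m M.
have ib1 : invmx b1 = lift_mx J1.
  apply: invmx_eq; rewrite eb1 /J1 !liftM -!mulmxA (mulmxA E) hED mul1mx.
  by rewrite (mulmxA (lift_mx G1)) LG1 mul1mx LMiM.
pose H1 := (m.+1)%:R *: J1 - Bm - Al.
have eb2' : b2 = lift_mx H1 - b1.
  by rewrite db2 /dPI_next ib1 hAl /H1 !liftB liftZn addrAC.
pose G2 := G1 - M *m H1 *m D.
have eb2 : b2 = lift_mx (- Mi) *m lift_mx G2 *m E.
  rewrite eb2' eb1 liftN mulNmx mulNmx /G2 (@liftB _ G1) !liftM mulmxBr mulmxBl.
  rewrite !mulmxA LMiM mul1mx -(mulmxA _ Dl) hDE mulmx1.
  by rewrite opprB.
have G20 : (\det G2) 0%N != 0 by apply: (shape (- Mi)); rewrite -eb2.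
have uG2 : G2 \in unitmx by exact: unitmx_fps.
pose G2i := invmx G2.
have hG2 : G2 *m G2i = 1%:M by exact: mulmxV.
have hG2' : G2i *m G2 = 1%:M by exact: mulVmx.
have LG2 : lift_mx G2 *m lift_mx G2i = 1%:M by rewrite -liftM hG2 lift1.
pose J2 := D *m G2i *m (- M).
have ib2 : invmx b2 = lift_mx J2.
  apply: invmx_eq; rewrite eb2 /J2 !liftM -!mulmxA (mulmxA E) hED mul1mx.
  rewrite (mulmxA (lift_mx G2)) LG2 mul1mx -liftM mulmxN mulNmx opprK.
  by rewrite hMiM lift1.
pose Z := M - (m.+2)%:R *: (G2i *m M) - (m.+1)%:R *: (G1i *m M).
have eb3 : b3 = lift_mx (D *m Z).
  rewrite db3 /dPI_next ib2 eb2' hAl.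
  have -> : (m.+2)%:R *: lift_mx J2 - b1 - (lift_mx H1 - b1) - lift_mx Al
          = lift_mx ((m.+2)%:R *: J2 - H1 - Al).
    by rewrite !liftB !liftZn opprB addrA subrK.
  congr lift_mx.
  rewrite /J2 /H1 /J1 /Z hBm; exact: eb3_alg.
have Z0 : (\det Z) 0%N != 0.
  apply: (@order_lemma _ r%:Z); move: h3.
  by rewrite eb3 liftdet det_mulmx detD mulrC tofracM tofracXn epsr.
have uZ : Z \in unitmx by exact: unitmx_fps.
pose Zi := invmx Z.
have hZ : Z *m Zi = 1%:M by exact: mulmxV.
have hZ' : Zi *m Z = 1%:M by exact: mulVmx.
have ib3 : invmx b3 = lift_mx Zi *m E.
  apply: invmx_eq; rewrite eb3 !liftM -!mulmxA (mulmxA (lift_mx Z)) -liftM hZ lift1 mul1mx.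
  exact: hDE.
pose Y := (m.+3)%:R *: Zi + Mi *m G2.
have eb4 : b4 = lift_mx Y *m E - lift_mx (D *m Z + Al).
  rewrite db4 /dPI_next ib3 eb2 eb3 hAl /Y (@liftD _ _ (Mi *m G2)) liftZn (@liftM _ Mi G2).
  rewrite (@liftD _ (D *m Z) Al) liftN mulmxDl -scalemxAl !mulNmx opprK.
  by rewrite opprD !addrA.
pose p : 'M[C]_N := diag_mx (\row_(i < N) (if (i < r)%N then 1 else 0)).
have hDp : map_mx c0 D *m p = 0.
  apply/matrixP => i j; rewrite mul_mx_diag !mxE.
  case jr : (j < r)%N; last by rewrite mulr0.
  case: (eqVneq i j) => [->|ne]; last by rewrite mulr0n rmorph0 mul0r.
  by rewrite mulr1n jr c0X mul0r.
have m0 : m%:R != 0 :> C by rewrite pnatr_eq0 -lt0n (ltn_trans _ m2).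
have cG1 : map_mx c0 G1 *m p = m%:R *: p.
  rewrite /G1 map_mxB map_mxZ rmorph_nat map_mx1 c0M mulmxBl -mulmxA hDp mulmx0 subr0.
  by rewrite -scalemxAl mul1mx.
have cG2 : map_mx c0 G2 *m p = m%:R *: p.
  by rewrite /G2 map_mxB c0M mulmxBl -mulmxA hDp mulmx0 subr0.
have e1 : map_mx c0 M *m map_mx c0 Mi = 1%:M by rewrite -c0M hMMi map_mx1.
have e2 : map_mx c0 G1i *m map_mx c0 G1 = 1%:M by rewrite -c0M hG1' map_mx1.
have e3 : map_mx c0 G2i *m map_mx c0 G2 = 1%:M by rewrite -c0M hG2' map_mx1.
have e4 : map_mx c0 Zi *m map_mx c0 Z = 1%:M by rewrite -c0M hZ' map_mx1.
have e5 : map_mx c0 Z *m map_mx c0 Zi = 1%:M by rewrite -c0M hZ map_mx1.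
have e6 := @mapZ_alg c0 N M G1i G2i m.+1 m.+2.
have cY : map_mx c0 Y *m p = 0.
  have := key_const m0 e1 e2 e3 e4 e5 cG1 cG2 e6.
  by rewrite mapY_alg.
have hYp (i j : 'I_N) : (j < r)%N -> Y i j 0%N = 0.
  move=> jr; have := congr1 (fun A : 'M[C]_N => A i j) cY.
  by rewrite /= mul_mx_diag !mxE jr mulr1.
pose Y' : 'M[fps]_N := \matrix_(i, j) if (j < r)%N then fshift (Y i j) else Y i j.
have hY : Y = Y' *m D.
  apply/matrixP => i j; rewrite mul_mx_diag !mxE; case jr : (j < r)%N; last by rewrite mulr1.
  by rewrite [RHS]mulrC fps_X_shift //; have := hYp i j jr; rewrite !mxE.
exists (Y' - (D *m Z + Al)); split.
  by rewrite eb4 hY liftM -mulmxA hDE mulmx1 liftB.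
move: h4; rewrite eb4 hY liftM -mulmxA hDE mulmx1 -liftB liftdet.
rewrite -[X in exact_order X]mulr1 -(expr0z eps) => /order_lemma.
have cE (A : 'M[fps]_N) : coef0_mx A = map_mx c0 A by [].
by rewrite cE det_map_mx.
Qed.
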